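(* Consider the Probabilistic Serial mechanism with $n$ agents and $m \le n$ items in the following dichotomous setting for agent 1. Agent 1 has a true strict linear order $\succ_1$ over the items; let $\overline{O}$ be the set of its $k$ most preferred items under $\succ_1$ (for some $1 \le k \le m$), and let agent 1's utility from an allocation be the total amount it receives of items in $\overline{O}$. Fix arbitrary reported strict linear orders of agents $2,\dots,n$. Let $u_1$ be agent 1's utility when it reports $\succ_1$, and let $T$ be the time at which the last item of $\overline{O}$ is exhausted in this truthful run. If $\tfrac23 \le T \le 1$, then for every strict linear order $\succ'_1$ reported by agent 1, its resulting utility $u'_1$ satisfies $u'_1 \le \tfrac32 u_1$.
   Context: Probabilistic Serial: there are $n$ agents and $m$ divisible items of unit supply; each agent reports a strict linear order over all items. Starting at time $0$, every agent consumes at rate $1$ per unit time its most preferred item (according to its report) among those with positive remaining supply; when an item is exhausted, agents consuming it move to their most preferred item still available; this continues until all items are exhausted. Each agent's allocation is the amount of each item it consumed. (In the truthful run agent 1 eats only items of $\overline{O}$ until time $T$, so $u_1 = T$.) *)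

(* Defs.v *)
From HB Require Import structures.
From mathcomp Require Import all_boot all_order all_algebra all_fingroup.
Set Implicit Arguments. Unset Strict Implicit. Unset Printing Implicit Defensive.
Import Order.TTheory GRing.Theory Num.Theory.
Local Open Scope ring_scope.

(* A strict linear order over the items 'I_m is encoded as a permutation
   [r : {perm 'I_m}] giving the RANK of each item: [r j] is the position of
   item j in the order, rank 0 = most preferred.  So j is preferred to j'
   iff  r j < r j'. *)

Section PS.
Variables (R : realFieldType) (n m : nat).

Definition top (r : {perm 'I_m}) (A : {set 'I_m}) : option 'I_m :=
  [pick j in A | [forall j' in A, (r j <= r j')%N]].

Record ps_state := PSState {
  supply : 'I_m -> R;
  alloc  : 'I_n -> 'I_m -> R;
  clock  : R;
  extime : 'I_m -> R
}.

Definition ps_init : ps_state :=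
  PSState (fun _ => 1) (fun _ _ => 0) 0 (fun _ => 0).

(* One phase of the eating algorithm: every agent eats its most preferred
   item with positive remaining supply, at rate 1, until the first moment
   some item gets exhausted. *)
Definition ps_step (prof : 'I_n -> {perm 'I_m}) (s : ps_state) : ps_state :=
  let A := [set j | 0 < supply s j] in
  let eat i := top (prof i) A in
  let cnt j := #|[set i | eat i == Some j]| in
  (* duration of the phase: earliest exhaustion time among eaten items.
     The default value 1 never matters: supplies stay <= 1, so every term
     supply/cnt is <= 1. *)
  let d := \big[Num.min/1]_(j in A | (0 < cnt j)%N) (supply s j / (cnt j)%:R) in
  let sup' j := supply s j - (cnt j)%:R * d in
  if A == set0 then s else
  PSState sup'
    (fun i j => alloc s i j + (if eat i == Some j then d else 0))
    (clock s + d)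
    (fun j => if (j \in A) && ~~ (0 < sup' j) then clock s + d else extime s j).

(* Each phase with remaining items exhausts at least one item, so after m
   phases all items are exhausted and the algorithm has terminated. *)
Definition ps_run (prof : 'I_n -> {perm 'I_m}) : ps_state :=
  iter m (ps_step prof) ps_init.

Definition PS (prof : 'I_n -> {perm 'I_m}) : 'I_n -> 'I_m -> R :=
  alloc (ps_run prof).

Definition exhaust_time (prof : 'I_n -> {perm 'I_m}) (j : 'I_m) : R :=
  extime (ps_run prof) j.

End PS.

Definition top_k (m k : nat) (r : {perm 'I_m}) : {set 'I_m} :=
  [set j | (r j < k)%N].

Definition dich_util (R : realFieldType) (n m : nat)
  (O : {set 'I_m}) (P : 'I_n -> 'I_m -> R) (a : 'I_n) : R :=
  \sum_(j in O) P a j.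

Definition deviate (n m : nat) (prof : 'I_n -> {perm 'I_m}) (a : 'I_n)
  (r : {perm 'I_m}) : 'I_n -> {perm 'I_m} :=
  fun i => if i == a then r else prof i.

(* Main.v *)
Require Import Defs.
From HB Require Import structures.
From mathcomp Require Import all_boot all_order all_algebra all_fingroup.
From mathcomp Require Import lra.
Import Order.TTheory GRing.Theory Num.Theory.
Local Open Scope ring_scope.
Set Implicit Arguments. Unset Strict Implicit.

Section Aux.
Variables (R : realFieldType) (n m : nat).

Lemma top_some (r : {perm 'I_m}) (A : {set 'I_m}) j0 : j0 \in A ->
  exists j, top r A = Some j.
Proof.
move=> Hj0; rewrite /top; case: pickP => [j _|H]; first by exists j.
case: (arg_minnP (fun j => r j) Hj0) => j Hj Hmin.
have Hall : [forall j' in A, (r j <= r j')%N].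
  by apply/forallP => j'; apply/implyP => Hj'; apply: Hmin.
have := H j; simpl. rewrite Hall andbT. move=> HH. have Hj2 : j \in A := Hj. by rewrite HH in Hj2.
Qed.

Lemma top_spec (r : {perm 'I_m}) (A : {set 'I_m}) j : top r A = Some j ->
  j \in A /\ forall j', j' \in A -> (r j <= r j')%N.
Proof.
rewrite /top; case: pickP => [j1 /andP[H1 /forallP H2] [<-]|//].
by split=> // j' Hj'; have := H2 j'; rewrite Hj'.
Qed.

Lemma bigmin_ge0 (I : Type) (s : seq I) (P : pred I) (F : I -> R) x0 :
  0 <= x0 -> (forall i, P i -> 0 <= F i) ->
  0 <= \big[Num.min/x0]_(i <- s | P i) F i.
Proof.
move=> H0 HF; apply: (big_ind (fun x => 0 <= x)) => // x y Hx Hy.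
by rewrite le_min Hx Hy.
Qed.

Lemma bigmin_le (I : eqType) (s : seq I) (P : pred I) (F : I -> R) x0 j :
  j \in s -> P j -> \big[Num.min/x0]_(i <- s | P i) F i <= F j.
Proof.
elim: s => // i s IH; rewrite inE big_cons => /orP[/eqP<- Pj|Hs Pj].
  by rewrite Pj ge_min lexx.
case: (P i); last exact: IH.
by rewrite ge_min IH ?orbT.
Qed.

End Aux.

Section Run.
Variables (R : realFieldType) (n m : nat) (prof : 'I_n -> {perm 'I_m}).

Lemma step_empty (s : ps_state R n m) : [set j | 0 < supply s j] == set0 -> ps_step prof s = s.
Proof. by rewrite /ps_step /= => ->. Qed.

Lemma step_spec (s : ps_state R n m) : (forall j, 0 <= supply s j) ->
  [set j | 0 < supply s j] != set0 ->
  exists (e : 'I_n -> 'I_m) (d : R),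
  [/\ forall i, top (prof i) [set j | 0 < supply s j] = Some (e i),
     0 <= d & forall j, (#|[set i | e i == j]|)%:R * d <= supply s j] /\
  [/\ forall j, supply (ps_step prof s) j = supply s j - (#|[set i | e i == j]|)%:R * d,
     forall i j, alloc (ps_step prof s) i j = alloc s i j + (if e i == j then d else 0),
     clock (ps_step prof s) = clock s + d &
     forall j, extime (ps_step prof s) j = if (0 < supply s j) && ~~ (0 < supply (ps_step prof s) j) then clock s + d else extime s j].
Proof.
move=> Hs HA; case/set0Pn: (HA) => j0 Hj0.
set A := [set j | 0 < supply s j] in HA Hj0 *.
pose e i := odflt j0 (top (prof i) A).
have He : forall i, top (prof i) A = Some (e i).
  by move=> i; rewrite /e; case: (top_some (prof i) Hj0) => j ->.
have Hc : forall j, [set i | top (prof i) A == Some j] = [set i | e i == j].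
  by move=> j; apply/setP => i; rewrite !inE He.
exists e.
rewrite /ps_step /= -/A (negbTE HA) /=.
set d := \big[Num.min/1]_(j in A | _) _.
exists d.
have Hd0 : 0 <= d.
  apply: bigmin_ge0 => // j /andP[HjA _]; apply: divr_ge0; last exact: ler0n.
  by move: HjA; rewrite inE => /ltW.
split; last first.
  split=> [j|i j||j]; rewrite ?Hc ?He ?inE //.
split=> // j.
rewrite -Hc.
case: (posnP #|[set i | top (prof i) A == Some j]|) => [->|Hpos].
  by rewrite mul0r.
have HjA : j \in A.
  case/card_gt0P: Hpos => i; rewrite inE => /eqP Hi.
  by case: (top_spec Hi).
have Hle : d <= supply s j / #|[set i | top (prof i) A == Some j]|%:R.
  by apply: (bigmin_le _ _ (mem_index_enum j)); rewrite HjA Hpos.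
rewrite mulrC -ler_pdivlMr ?ltr0n //.
Qed.

Lemma sum_ite_card (e : 'I_n -> 'I_m) (j : 'I_m) (d : R) :
  \sum_i (if e i == j then d else 0) = #|[set i | e i == j]|%:R * d.
Proof.
by rewrite -big_mkcond /= sumr_const mulr_natl; congr (_ *+ _); apply: eq_card => i; rewrite inE.
Qed.

Lemma sum_ite1 (P : pred 'I_m) (j0 : 'I_m) (d : R) : P j0 ->
  \sum_(j | P j) (if j0 == j then d else 0) = d.
Proof.
move=> Pj0; rewrite (bigD1 j0) //= eqxx big1 ?addr0 // => j /andP[_ Hj].
by rewrite eq_sym (negbTE Hj).
Qed.

Definition Inv (s : ps_state R n m) :=
  [/\ forall j, 0 <= supply s j, forall i j, 0 <= alloc s i j,
      forall i, \sum_j alloc s i j = clock s &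
      forall j, \sum_i alloc s i j + supply s j = 1].

Lemma Inv_step s : Inv s -> Inv (ps_step prof s).
Proof.
move=> [H1 H2 H3 H4].
have [HA|HA] := eqVneq [set j | 0 < supply s j] set0.
  by rewrite step_empty ?HA.
have [e [d [[He Hd0 Hle] [Es Ea Ec Ex]]]] := step_spec H1 HA.
split.
- by move=> j; rewrite Es subr_ge0.
- move=> i j; rewrite Ea; apply: addr_ge0 => //; by case: ifP.
- move=> i; rewrite Ec; under eq_bigr do rewrite Ea.
  by rewrite big_split /= H3 (sum_ite1 _ _ (P := predT)).
- move=> j; rewrite Es; under eq_bigr do rewrite Ea.
  rewrite big_split /= sum_ite_card -(H4 j); lra.
Qed.

Lemma Inv_iter k : Inv (iter k (ps_step prof) (ps_init R n m)).
Proof.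
elim: k => [|k IH] /=; last exact: Inv_step.
by split=> //= *; rewrite big1 ?add0r.
Qed.

End Run.

Section Truth.
Variables (R : realFieldType) (n m k : nat) (a : 'I_n) (prof : 'I_n -> {perm 'I_m}).
Let O := top_k k (prof a).
Let u (s : ps_state R n m) := \sum_(j in O) alloc s a j.

Definition TInv (s : ps_state R n m) :=
  (forall j, j \in O -> extime s j <= u s) /\
  ((exists j, (j \in O) && (0 < supply s j)) -> u s = clock s).

Lemma TInv_step s : Inv s -> TInv s -> TInv (ps_step prof s).
Proof.
move=> [H1 H2 H3 H4] [T1 T2].
have [HA|HA] := eqVneq [set j | 0 < supply s j] set0.
  by rewrite step_empty ?HA.
have [e [d [[He Hd0 Hle] [Es Ea Ec Ex]]]] := step_spec prof H1 HA.
have Eu : u (ps_step prof s) = u s + \sum_(j in O) (if e a == j then d else 0).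
  by rewrite /u -big_split; apply: eq_bigr => j _; rewrite Ea.
have Hge : u s <= u (ps_step prof s).
  rewrite Eu lerDl; apply: sumr_ge0 => j _; by case: ifP.
case: (boolP [exists j, (j \in O) && (0 < supply s j)]) => [/existsP [j1 /andP[Hj1O Hj1s]]|Hno].
  have HeO : e a \in O.
    have [_ Hmin] := top_spec (He a).
    have Hj1A : j1 \in [set j | 0 < supply s j] by rewrite inE.
    move: Hj1O; rewrite /O /top_k !inE => Hj1O.
    exact: leq_ltn_trans (Hmin j1 Hj1A) Hj1O.
  have Hu : u (ps_step prof s) = u s + d.
    rewrite Eu (bigD1 (e a)) //= eqxx big1 ?addr0 // => j /andP[_ Hj].
    by rewrite eq_sym (negbTE Hj).
  have Hu0 : u s = clock s by apply: T2; exists j1; rewrite Hj1O.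
  split.
    move=> j HjO; rewrite Ex; case: ifP => _.
      by rewrite Hu Hu0.
    exact: le_trans (T1 j HjO) Hge.
  by move=> _; rewrite Hu Ec Hu0.
have Hnot : forall j, j \in O -> ~~ (0 < supply s j).
  move=> j Hj; apply/negP => Hs; move/negP: Hno; apply; apply/existsP; exists j.
  by rewrite Hj.
split.
  move=> j HjO; rewrite Ex (negbTE (Hnot j HjO)) /=.
  exact: le_trans (T1 j HjO) Hge.
case=> j /andP[HjO Hs']; exfalso.
rewrite Es in Hs'.
have := Hnot j HjO; rewrite -leNgt => Hle0.
have Hcd : 0 <= #|[set i | e i == j]|%:R * d by apply: mulr_ge0; rewrite ?ler0n.
lra.
Qed.

Lemma TInv_iter t : TInv (iter t (ps_step prof) (ps_init R n m)).
Proof.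
elim: t => [|t IH] /=.
  split=> [j _|_]; rewrite /u /= ?big1 //.
apply: TInv_step IH; exact: Inv_iter.
Qed.

End Truth.

Theorem theorem3 (R : realFieldType) (n m k : nat) (a : 'I_n)
  (prof : 'I_n -> {perm 'I_m}) :
  (m <= n)%N -> (1 <= k)%N -> (k <= m)%N ->
  let O := top_k k (prof a) in
  let u1 := dich_util O (PS R prof) a in
  let T := \big[Num.max/0]_(j in O) exhaust_time R prof j in
  2 / 3 <= T -> T <= 1 ->
  forall r' : {perm 'I_m},
    dich_util O (PS R (deviate prof a r')) a <= 3 / 2 * u1.
Proof.
move=> Hmn Hk1 Hkm O u1 T HT1 HT2 r'.
have [T1 _] := @TInv_iter R n m k a prof m.
have [F1 F2 F3 F4] := @Inv_iter R n m prof m.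
have Hu1 : T <= u1.
  rewrite /T; apply: (big_ind (fun x => x <= u1)).
  - by apply: sumr_ge0 => j _; apply: F2.
  - by move=> x y Hx Hy; rewrite ge_max Hx Hy.
  - by move=> j Hj; apply: (T1 j Hj).
have [G1 G2 G3 G4] := @Inv_iter R n m (deviate prof a r') m.
set s := iter m (ps_step (deviate prof a r')) (ps_init R n m) in G1 G2 G3 G4.
have Hn : (0 < n)%N by apply: leq_ltn_trans (ltn_ord a).
have Hc : n%:R * clock s <= n%:R :> R.
  have -> : n%:R * clock s = \sum_(i < n) clock s.
    by rewrite sumr_const card_ord mulr_natl.
  rewrite (eq_bigr _ (fun i _ => esym (G3 i))) exchange_big /=.
  apply: (@le_trans _ _ (\sum_(j < m) (1 : R))).
    apply: ler_sum => j _; rewrite -(G4 j) lerDl; exact: G1.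
  by rewrite sumr_const card_ord ler_nat.
have Hc1 : clock s <= 1.
  by move: Hc; rewrite -{2}(mulr1 n%:R) ler_pM2l ?ltr0n.
have Hd : dich_util O (PS R (deviate prof a r')) a <= 1.
  rewrite /dich_util /PS /ps_run -/s.
  apply: le_trans Hc1.
  rewrite -(G3 a) [X in X <= _]big_mkcond /=; apply: ler_sum => j _.
  by case: ifP => // _; apply: G2.
move: Hu1; rewrite /u1 => Hu1.
lra.
Qed.
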